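(* Let $Q$ be a graph property that has an independence function or a clique function $f:\mathbb{N}\to\mathbb{N}$ such that there is a fixed $a\in\mathbb{N}$ with $f(n)\ge n/a$ for all $n\in\mathbb{N}$. Then the graph polynomial $P_Q$ is weakly distinguishing.
   Context: All graphs are finite and simple. A graph property is a class of graphs closed under isomorphism. For $A\subseteq V(G)$, $G[A]$ is the induced subgraph on $A$. A function $f:\mathbb{N}\to\mathbb{N}$ is an independence function (resp. clique function) for a property $Q$ if every graph $G\in Q$ has an independent set (resp. a clique) of size $f(|V(G)|)$. For a property $Q$, $P_Q(G;X)=\sum_{A\subseteq V(G):\, G[A]\in Q} X^{|A|}$. For a graph polynomial $P$ (an isomorphism-invariant map from graphs to polynomials), $G$ is $P$-unique if every graph $H$ with $P(G)=P(H)$ is isomorphic to $G$. Let $\mathcal{G}(n)$ be the set of isomorphism classes of graphs on $n$ vertices and $U_P(n)$ the set of $P$-unique graphs in $\mathcal{G}(n)$. $P$ is weakly distinguishing if $\lim_{n\to\infty}|U_P(n)|/|\mathcal{G}(n)|=0$. *)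

(* Defs.v *)
From HB Require Import structures.
From mathcomp Require Import all_boot all_order all_algebra.
From mathcomp Require Import fingroup perm.
From mathcomp Require Import boolp.
Set Implicit Arguments. Unset Strict Implicit. Unset Printing Implicit Defensive.
Import Order.TTheory GRing.Theory Num.Theory.

Definition simple_edges n (E : {set 'I_n * 'I_n}) : bool :=
  [forall x, (x, x) \notin E] &&
  [forall x, forall y, ((x, y) \in E) == ((y, x) \in E)].

Definition sgraph n := {E : {set 'I_n * 'I_n} | simple_edges E}.

Definition adj n (G : sgraph n) (x y : 'I_n) : bool := (x, y) \in val G.

Definition iso n m (G : sgraph n) (H : sgraph m) : Prop :=
  exists f : 'I_n -> 'I_m, bijective f /\
    forall x y, adj G x y = adj H (f x) (f y).

Definition iso_b n (G H : sgraph n) : bool :=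
  [exists f : {perm 'I_n}, [forall x, forall y, adj G x y == adj H (f x) (f y)]].

Definition graph_property (Q : forall n, sgraph n -> bool) : Prop :=
  forall n m (G : sgraph n) (H : sgraph m), iso G H -> Q n G = Q m H.

Definition induced_edges n (G : sgraph n) (A : {set 'I_n}) :
  {set 'I_#|A| * 'I_#|A|} :=
  [set p | adj G (enum_val p.1) (enum_val p.2)].

Lemma induced_simple n (G : sgraph n) (A : {set 'I_n}) :
  simple_edges (induced_edges G A).
Proof.
have /andP [/forallP Hirr /forallP Hsym] := valP G.
apply/andP; split; apply/forallP => x.
  by rewrite inE /adj (negbTE (Hirr _)).
apply/forallP => y; rewrite !inE /adj.
exact: (forallP (Hsym _)).
Qed.

Definition induced n (G : sgraph n) (A : {set 'I_n}) : sgraph #|A| :=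
  exist _ (induced_edges G A) (induced_simple G A).

Definition independent n (G : sgraph n) (A : {set 'I_n}) : bool :=
  [forall x in A, forall y in A, ~~ adj G x y].

Definition clique n (G : sgraph n) (A : {set 'I_n}) : bool :=
  [forall x in A, forall y in A, (x != y) ==> adj G x y].

Definition independence_function (Q : forall n, sgraph n -> bool)
  (f : nat -> nat) : Prop :=
  forall n (G : sgraph n), Q n G ->
    exists A : {set 'I_n}, independent G A /\ #|A| = f n.

Definition clique_function (Q : forall n, sgraph n -> bool)
  (f : nat -> nat) : Prop :=
  forall n (G : sgraph n), Q n G ->
    exists A : {set 'I_n}, clique G A /\ #|A| = f n.

Definition P_Q (Q : forall n, sgraph n -> bool) n (G : sgraph n) : {poly int} :=
  (\sum_(A : {set 'I_n} | Q #|A| (induced G A)) 'X^#|A|)%R.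

Definition P_unique (P : forall n, sgraph n -> {poly int}) n (G : sgraph n)
  : Prop :=
  forall m (H : sgraph m), P m H = P n G -> iso H G.

Definition graph_classes n : {set {set sgraph n}} :=
  equivalence_partition (@iso_b n) [set: sgraph n].

Definition unique_classes (P : forall n, sgraph n -> {poly int}) n
  : {set {set sgraph n}} :=
  [set C in graph_classes n | `[< forall G, G \in C -> P_unique P G >]].

Definition weakly_distinguishing (P : forall n, sgraph n -> {poly int}) : Prop :=
  forall eps : rat, (0 < eps)%R -> exists N, forall n, (N <= n)%N ->
    ((#|unique_classes P n|%:R / #|graph_classes n|%:R) < eps)%R.

(* Main.v *)
Require Import Defs.
From mathcomp Require Import all_boot all_order all_algebra.
From mathcomp Require Import fingroup perm zify boolp.
Set Implicit Arguments. Unset Strict Implicit. Unset Printing Implicit Defensive.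

Section Basics.
Variable n : nat.
Implicit Types G H : sgraph n.

Lemma adj_irr G x : adj G x x = false.
Proof. by have /andP [/forallP H _] := valP G; apply/negbTE/H. Qed.

Lemma adj_sym G x y : adj G x y = adj G y x.
Proof. by have /andP [_ /forallP H] := valP G; apply/eqP/(forallP (H x)). Qed.

Definition Up : {set 'I_n * 'I_n} := [set p : 'I_n * 'I_n | (p.1 < p.2)%N].

Lemma sg_inj G1 G2 : val G1 :&: Up = val G2 :&: Up -> G1 = G2.
Proof.
move=> E; apply: val_inj; apply/setP => -[x y].
have Eq p : p \in Up -> (p \in val G1) = (p \in val G2).
  by move=> pU; move/setP: E => /(_ p); rewrite !in_setI pU !andbT.
case: (ltngtP x y) => [lt|gt|eq].
- by apply: Eq; rewrite inE.
- have := Eq (y, x); rewrite inE /= => /(_ gt).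
  by have := adj_sym G1 x y; have := adj_sym G2 x y; rewrite /adj => -> -> .
- have -> : x = y by apply: val_inj.
  by have := adj_irr G1 y; have := adj_irr G2 y; rewrite /adj => -> ->.
Qed.

Lemma iso_b_refl G : iso_b G G.
Proof. by apply/existsP; exists 1%g; apply/forallP => x; apply/forallP => y; rewrite !perm1. Qed.

Lemma iso_b_sym G H : iso_b G H -> iso_b H G.
Proof.
move=> /existsP [f /forallP Hf]; apply/existsP; exists f^-1%g.
apply/forallP => x; apply/forallP => y.
by have /forallP /(_ (f^-1%g y)) /eqP := Hf (f^-1%g x); rewrite !permKV => ->.
Qed.

Lemma iso_b_trans G H K : iso_b G H -> iso_b H K -> iso_b G K.
Proof.
move=> /existsP [f /forallP Hf] /existsP [g /forallP Hg]; apply/existsP; exists (f * g)%g.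
apply/forallP => x; apply/forallP => y; rewrite !permM.
by have /forallP /(_ y) /eqP -> := Hf x; have /forallP /(_ (f y)) := Hg (f x).
Qed.

Lemma iso_b_equiv : {in [set: sgraph n] & &, equivalence_rel (@iso_b n)}.
Proof.
move=> G H K _ _ _; split; first exact: iso_b_refl.
move=> GH; apply/idP/idP => [GK|HK].
  exact: iso_b_trans (iso_b_sym GH) GK.
exact: iso_b_trans GH HK.
Qed.

Lemma classes_partition : partition (graph_classes n) [set: sgraph n].
Proof. exact: equivalence_partitionP iso_b_equiv. Qed.

Lemma iso_iso_b G H : iso G H -> iso_b G H.
Proof.
move=> [f [fb Hf]]; apply/existsP; exists (perm (bij_inj fb)).
by apply/forallP => x; apply/forallP => y; rewrite !permE Hf.
Qed.

End Basics.

Section Counts.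
Variable n : nat.
Implicit Types G H : sgraph n.

Definition witness G H : {perm 'I_n} :=
  odflt 1%g [pick f : {perm 'I_n} | [forall x, forall y, adj G x y == adj H (f x) (f y)]].

Lemma class_small G : #|[set H in [set: sgraph n] | iso_b G H]| <= n`!.
Proof.
have -> : n`! = #|{perm 'I_n}| by rewrite -card_Sn.
apply: (@leq_card_in _ _ (witness G)) => H1 H2.
rewrite !inE /= /iso_b => /existsP [f1 Hf1] /existsP [f2 Hf2] E.
have W H : [exists f : {perm 'I_n}, [forall x, forall y, adj G x y == adj H (f x) (f y)]] ->
   forall x y, adj G x y = adj H (witness G H x) (witness G H y).
  rewrite /witness; case: pickP => [f /forallP Hf _ x y|].
    by apply/eqP; have /forallP := Hf x; apply.
  by move=> Hn /existsP [f Hf]; rewrite Hn in Hf.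
have W1 := W H1 (introT existsP (ex_intro _ f1 Hf1)).
have W2 := W H2 (introT existsP (ex_intro _ f2 Hf2)).
rewrite -E in W2.
apply: val_inj; apply/setP => -[u v].
set g := witness G H1 in W1 W2.
have -> : u = g (g^-1%g u) by rewrite permKV.
have -> : v = g (g^-1%g v) by rewrite permKV.
by have := W1 (g^-1%g u) (g^-1%g v); have := W2 (g^-1%g u) (g^-1%g v); rewrite /adj => <- <-.
Qed.

Lemma classes_lb : #|[set: sgraph n]| <= #|graph_classes n| * n`!.
Proof.
rewrite (card_partition (classes_partition n)).
rewrite -sum_nat_const; apply: leq_sum => C.
rewrite /graph_classes /equivalence_partition => /imsetP [G _ ->].
exact: class_small.
Qed.

Definition symS (S : {set 'I_n * 'I_n}) : {set 'I_n * 'I_n} :=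
  [set p : 'I_n * 'I_n | ((p.1 < p.2)%N && (p \in S)) || ((p.2 < p.1)%N && ((p.2, p.1) \in S))].

Lemma symS_simple S : simple_edges (symS S).
Proof.
apply/andP; split; apply/forallP => x; first by rewrite inE /= ltnn.
apply/forallP => y; rewrite !inE /=; apply/eqP; by rewrite orbC.
Qed.

Definition mkG S : sgraph n := exist _ (symS S) (symS_simple S).



Lemma mkG_Up S : val (mkG S) :&: Up n = S :&: Up n.
Proof.
apply/setP => -[x y]; rewrite !inE /=.
by case: (ltngtP x y) => h; rewrite ?h ?ltnn ?andbT ?andbF ?orbF.
Qed.

Lemma graphs_lb : 2 ^ #|Up n| <= #|[set: sgraph n]|.
Proof.
rewrite -card_powerset -(@card_in_imset _ _ mkG).
  by apply: subset_leq_card; apply/subsetP => G; rewrite inE.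
move=> S1 S2; rewrite !inE => s1 s2 E.
have := mkG_Up S1; rewrite E mkG_Up.
by rewrite (setIidPl s1) (setIidPl s2) => ->.
Qed.

End Counts.

Definition homb (b : bool) n (G : sgraph n) (A : {set 'I_n}) : bool :=
  if b then independent G A else clique G A.

Lemma homb_sub b n (G : sgraph n) (A B : {set 'I_n}) : homb b G A -> B \subset A -> homb b G B.
Proof.
move=> H /subsetP sBA; case: b H => /forall_inP H; apply/forall_inP => x xB;
  apply/forall_inP => y yB; exact: (forall_inP (H x (sBA x xB)) y (sBA y yB)).
Qed.

Lemma homb_lift b n (G : sgraph n) (A : {set 'I_n}) (B : {set 'I_#|A|}) :
  homb b (induced G A) B -> homb b G [set (@enum_val _ (mem A) x) | x in B].
Proof.
case: b => /forall_inP H; apply/forall_inP => _ /imsetP [x xB ->];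
  apply/forall_inP => _ /imsetP [y yB ->];
  have := forall_inP (H x xB) y yB; rewrite /adj /induced /= /induced_edges inE //=.
by rewrite (inj_eq enum_val_inj).
Qed.

Lemma card_lift n (A : {set 'I_n}) (B : {set 'I_#|A|}) :
  #|[set (@enum_val _ (mem A) x) | x in B]| = #|B|.
Proof. by rewrite card_imset //; apply: enum_val_inj. Qed.

Lemma exists_sub_aux (T : finType) k m : forall (A : {set T}), #|A| <= m -> k <= #|A| ->
  exists2 B : {set T}, B \subset A & #|B| = k.
Proof.
elim: m => [|m IH] A.
  rewrite leqn0 => /eqP A0; rewrite A0 leqn0 => /eqP ->; exists set0; by rewrite ?sub0set ?cards0.
move=> Am kA; case: (ltngtP k #|A|) kA => // [lt|eq] _; last by exists A.
have : 0 < #|A| by apply: leq_ltn_trans lt.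
rewrite card_gt0 => /set0Pn [x xA].
have cA := cardsD1 x A; rewrite xA in cA.
have [||B sB cB] := IH (A :\ x); [by lia | by lia |].
exists B => //; apply: subset_trans sB _; exact: subD1set.
Qed.

Lemma exists_sub (T : finType) (A : {set T}) k : k <= #|A| ->
  exists2 B : {set T}, B \subset A & #|B| = k.
Proof. exact: exists_sub_aux. Qed.

Lemma pairs_count n (A : {set 'I_n}) :
  2 * #|Up n :&: setX A A| = #|A| * #|A| - #|A|.
Proof.
set X := setX A A.
set Dg := [set p : 'I_n * 'I_n | p.1 == p.2].
have h1 := cardsID (Up n) X.
have h2 := cardsID Dg (X :\: Up n).
have e1 : (X :\: Up n) :&: Dg = [set (x, x) | x in A].
  apply/setP => -[x y]; rewrite !inE /=; apply/idP/imsetP => [/andP [/andP [ny /andP [xA yA]] /eqP exy]|[z zA [-> ->]]].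
    by exists x => //; rewrite exy.
  by rewrite ltnn zA eqxx.
have e2 : (X :\: Up n) :\: Dg = [set (p.2, p.1) | p in Up n :&: X].
  apply/setP => -[x y]; rewrite !inE /=; apply/idP/imsetP => [/andP [nxy /andP [nyx /andP [xA yA]]]|[[u v]]].
    exists (y, x) => //; rewrite !inE /= xA yA !andbT.
    by rewrite ltn_neqAle eq_sym nxy /= leqNgt.
  rewrite !inE /= => /andP [uv /andP [uA vA]] [-> ->].
  rewrite uA vA !andbT -leqNgt (ltnW uv) andbT.
  by rewrite neq_ltn uv orbT.
have e3 : #|[set (p.2, p.1) | p in Up n :&: X]| = #|Up n :&: X|.
  by apply: card_imset => -[u v] [u' v'] [-> ->].
have e4 : #|[set (x, x) | x in A]| = #|A|.
  by apply: card_imset => u v [].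
rewrite e1 e2 e3 e4 in h2.
have h3 : #|X| = #|A| * #|A| by rewrite cardsX.
rewrite setIC in h1; rewrite -h3 -h1 -h2; lia.
Qed.

Lemma hom_count b n (B : {set 'I_n}) :
  #|[set G : sgraph n | homb b G B]| <= 2 ^ (#|Up n| - #|Up n :&: setX B B|).
Proof.
set D := Up n :\: setX B B.
rewrite -cardsD -card_powerset.
rewrite -(@card_in_imset _ _ (fun G : sgraph n => val G :&: D)).
  apply: subset_leq_card; apply/subsetP => _ /imsetP [G _ ->].
  by rewrite inE subsetIr.
move=> G1 G2; rewrite !inE => h1 h2 E; apply: sg_inj.
apply/setP => -[x y]; rewrite !in_setI.
case U: ((x, y) \in Up n); rewrite ?andbF ?andbT //.
case XB: ((x, y) \in setX B B).
  move: XB; rewrite inE /= => /andP [xB yB].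
  move: U; rewrite inE /= => xy.
  case: b h1 h2 => /forall_inP h1 /forall_inP h2.
    by have := forall_inP (h1 x xB) y yB; have := forall_inP (h2 x xB) y yB;
       rewrite /adj => /negbTE -> /negbTE ->.
  have nxy : x != y by rewrite neq_ltn xy.
  by have := forall_inP (h1 x xB) y yB; have := forall_inP (h2 x xB) y yB;
     rewrite nxy /adj /= => -> ->.
move/setP: E => /(_ (x, y)); rewrite !in_setI !in_setD U XB /= !andbT.
by [].
Qed.

Lemma card_bigcup_le (I T : finType) (P : pred I) (F : I -> {set T}) :
  #|\bigcup_(i | P i) F i| <= \sum_(i | P i) #|F i|.
Proof.
apply: (big_ind2 (fun (S : {set T}) m => #|S| <= m)); first by rewrite cards0.
  move=> S1 m1 S2 m2 h1 h2; apply: leq_trans (leq_card_setU S1 S2) _.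
  exact: leq_add.
by [].
Qed.

Definition bad b n k := [set G : sgraph n | [exists B : {set 'I_n}, homb b G B && (#|B| == k)]].

Lemma bad_count b n k : #|bad b n k| * 2 ^ ((k * k - k) %/ 2) <= 2 ^ n * 2 ^ #|Up n|.
Proof.
have sub : bad b n k \subset \bigcup_(B : {set 'I_n} | #|B| == k) [set G : sgraph n | homb b G B].
  apply/subsetP => G; rewrite inE => /existsP [B /andP [hB cB]].
  by apply/bigcupP; exists B => //; rewrite inE.
apply: leq_trans (leq_mul (leq_trans (subset_leq_card sub) (card_bigcup_le _ _)) (leqnn _)) _.
rewrite big_distrl /=.
apply: (@leq_trans (\sum_(B : {set 'I_n} | #|B| == k) 2 ^ #|Up n|)).
  apply: leq_sum => B /eqP cB.
  apply: leq_trans (leq_mul (hom_count b B) (leqnn _)) _.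
  have pc := pairs_count B; rewrite cB in pc.
  have le1 : #|Up n :&: setX B B| <= #|Up n| by apply: subset_leq_card; apply: subsetIl.
  have e : (k * k - k) %/ 2 = #|Up n :&: setX B B| by rewrite -pc mulKn.
  by rewrite e -expnD subnK.
rewrite sum_nat_const; apply: leq_mul => //.
have -> : 2 ^ n = #|{set 'I_n}|.
  by rewrite -[in LHS](card_ord n) -cardsT -card_powerset; apply: eq_card => A; rewrite !inE subsetT.
exact: max_card.
Qed.

Import GRing.Theory.

Definition cnt (Q : forall n, sgraph n -> bool) n (G : sgraph n) j :=
  #|[set A : {set 'I_n} | Q #|A| (induced G A) && (#|A| == j)]|.

Lemma coef_PQ Q n (G : sgraph n) j : ((P_Q Q G)`_j = (cnt Q G j)%:R)%R.
Proof.
rewrite /P_Q coef_sum.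
rewrite (eq_bigr (fun A : {set 'I_n} => ((#|A| == j) : nat)%:R)%R); last first.
  by move=> A _; rewrite coefXn eq_sym.
rewrite -natr_sum; congr (_%:R)%R.
rewrite /cnt -sum1_card big_mkcond [in RHS]big_mkcond /=.
apply: eq_bigr => A _; rewrite inE; by case: (Q _ _); case: (#|A| == j).
Qed.

Lemma card_sets n : #|{set 'I_n}| = 2 ^ n.
Proof.
by rewrite -[in RHS](card_ord n) -[in RHS]cardsT -card_powerset; apply: eq_card => A; rewrite !inE subsetT.
Qed.

Lemma cnt_le Q n (G : sgraph n) j : cnt Q G j <= 2 ^ n.
Proof. by rewrite -card_sets; apply: max_card. Qed.

Section Good.
Variables (Q : forall n : nat, sgraph n -> bool) (f : nat -> nat) (a : nat) (b : bool).
Hypothesis a_gt0 : 0 < a.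
Hypothesis hf : forall m, m <= a * f m.
Hypothesis HF : forall m (H : sgraph m), Q H -> exists B, homb b H B /\ #|B| = f m.

Lemma good_cnt n k (G : sgraph n) j : G \notin bad b n k -> a * k <= j -> cnt Q G j = 0.
Proof.
move=> nb le; apply/eqP; rewrite cards_eq0; apply/eqP/setP => A; rewrite !inE.
apply/negbTE/negP => /andP [qA /eqP cA].
have [B [hB cB]] := HF qA.
have hB' := homb_lift hB.
have cB' := card_lift B.
case: (leqP k (f #|A|)) => [kf|fk].
  have [|B'' sB cB''] := exists_sub (k:=k) (A:=[set (@enum_val _ (mem A) x) | x in B]).
    by rewrite cB' cB.
  move: nb; rewrite inE => /existsP; apply; exists B''.
  by rewrite cB'' eqxx andbT; apply: homb_sub hB' sB.
have := hf #|A|; have : a * f #|A| < a * k by rewrite ltn_pmul2l.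
lia.
Qed.

Definition code n k (G : sgraph n) : {ffun 'I_(a * k) -> 'I_(2 ^ n).+1} :=
  [ffun j : 'I_(a * k) => inord (cnt Q G j)].

Lemma code_inj n k (G1 G2 : sgraph n) : G1 \notin bad b n k -> G2 \notin bad b n k ->
  code k G1 = code k G2 -> P_Q Q G1 = P_Q Q G2.
Proof.
move=> n1 n2 E; apply/polyP => j; rewrite !coef_PQ; congr (_%:R)%R.
case: (ltnP j (a * k)) => [lt|ge]; last by rewrite !(good_cnt (k:=k)).
move/ffunP: E => /(_ (Ordinal lt)); rewrite !ffunE /= => /(congr1 val).
by rewrite /= !inordK // ltnS cnt_le.
Qed.

End Good.

Section Classes.
Variable n : nat.

Lemma class_closed (C : {set sgraph n}) G H : C \in graph_classes n -> G \in C -> iso_b G H -> H \in C.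
Proof.
rewrite /graph_classes /equivalence_partition => /imsetP [x _ ->].
rewrite !inE /= => xG GH; exact: iso_b_trans xG GH.
Qed.

Lemma class_eq (C1 C2 : {set sgraph n}) G : C1 \in graph_classes n -> C2 \in graph_classes n ->
  G \in C1 -> G \in C2 -> C1 = C2.
Proof.
have /and3P [_ tI _] := classes_partition n.
move=> c1 c2 g1 g2; by rewrite -(def_pblock tI c1 g1) -(def_pblock tI c2 g2).
Qed.

Definition rep (C : {set sgraph n}) : sgraph n := odflt (mkG set0) [pick G in C].

Lemma rep_in C : C \in graph_classes n -> rep C \in C.
Proof.
move=> cC; rewrite /rep; case: pickP => [G //|none].
have /and3P [_ _ n0] := classes_partition n.
have C0 : C = set0 by apply/setP => G; rewrite inE none.
by move: n0; rewrite -C0 cC.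
Qed.

End Classes.

Section Unique.
Variables (Q : forall n : nat, sgraph n -> bool) (f : nat -> nat) (a : nat) (b : bool).
Hypothesis a_gt0 : 0 < a.
Hypothesis hf : forall m, m <= a * f m.
Hypothesis HF : forall m (H : sgraph m), Q H -> exists B, homb b H B /\ #|B| = f m.

Lemma unique_bound n k :
  #|unique_classes (P_Q Q) n| <= #|bad b n k| + (2 ^ n).+1 ^ (a * k).
Proof.
set UC := unique_classes (P_Q Q) n.
have UCc : forall C, C \in UC -> C \in graph_classes n.
  by move=> C; rewrite inE; case/andP.
have hID := cardsID [set C : {set sgraph n} | rep C \in bad b n k] UC; rewrite -hID.
apply: leq_add.
  rewrite -(@card_in_imset _ _ (@rep n)).
    apply: subset_leq_card; apply/subsetP => x /imsetP [C CA ->].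
    by move: CA; rewrite in_setI [in X in _ && X]inE => /andP [_ ->].
  move=> C1 C2; rewrite in_setI => /andP [c1 _]; rewrite in_setI => /andP [c2 _] E.
  apply: (class_eq (G := rep C1)); rewrite ?UCc //; first exact: rep_in (UCc _ c1).
  by rewrite E; exact: rep_in (UCc _ c2).
have e : (2 ^ n).+1 ^ (a * k) = #|{ffun 'I_(a * k) -> 'I_(2 ^ n).+1}| by rewrite card_ffun !card_ord.
rewrite e.
rewrite -(@card_in_imset _ _ (fun C => code Q a k (rep C))).
  by apply: max_card.
move=> C1 C2; rewrite in_setD [in X in X && _]inE => /andP [n1 c1].
rewrite in_setD [in X in X && _]inE => /andP [n2 c2] E.
have EP := code_inj a_gt0 hf HF n1 n2 E.
move: c1; rewrite inE => /andP [cc1 /asboolP U1].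
move: c2; rewrite inE => /andP [cc2 /asboolP U2].
have r1 := rep_in cc1; have r2 := rep_in cc2.
have I := U1 _ r1 n (rep C2) (esym EP).
apply: (class_eq (G := rep C2)) => //.
exact: class_closed r1 (iso_b_sym (iso_iso_b I)).
Qed.

End Unique.

Lemma E1_pure b k M : 4 * b + 4 * M + 8 <= k ->
  4 * b * (k + 1) + 4 * M + (k + 1) * (k + 1) + 2 <= 2 * (k * k - k).
Proof.
move=> kb.
have p1 : (4 * b + 4 * M + 8) * k <= k * k by apply: leq_mul.
have p2 : M <= M * k by rewrite leq_pmulr //; lia.
rewrite !mulnDr !mulnDl !muln1 !mul1n in p1 *.
rewrite ?mulnA in p1 *.
move: p1 p2; generalize (b * k) (M * k) (k * k) (0 * k) => x y z w; lia.
Qed.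

Lemma E1_core b k M n K2 : n <= b * k + b -> 4 * b + 4 * M + 8 <= k ->
  k * k - k <= 2 * K2 + 1 ->
  4 * b * b * (n + M) + n * n <= 4 * b * b * K2.
Proof.
move=> nb kb kk.
have P := E1_pure kb.
have A1 : n * n <= (b * b) * ((k + 1) * (k + 1)).
  rewrite mulnACA; apply: leq_mul; rewrite mulnDr muln1 //; lia.
have A2 : 4 * (n + M) <= 4 * b * (k + 1) + 4 * M.
  have : 4 * n <= 4 * (b * (k + 1)) by rewrite leq_mul2l /= mulnDr muln1.
  rewrite mulnA; lia.
have A3 : 4 * b * (k + 1) + 4 * M + (k + 1) * (k + 1) <= 4 * K2 by lia.
have e1 : 4 * b * b * (n + M) = (b * b) * (4 * (n + M)).
  lia.
have e2 : 4 * b * b * K2 = (b * b) * (4 * K2).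
  lia.
rewrite e1 e2.
apply: leq_trans (leq_add (leq_mul (leqnn (b * b)) A2) A1) _.
rewrite -mulnDr; apply: leq_mul => //.
Qed.

Lemma E2_core c y M n U : 16 <= c -> 8 * y <= (n + 1) * n -> 8 * M + 8 <= n ->
  n * n - n <= 2 * U + 1 ->
  c * (y + M) + n * n <= c * U.
Proof.
move=> c16 hy hn hU.
have n8 : 8 * n <= n * n by apply: leq_mul => //; lia.
have X : 3 * (n * n) + 2 * n + 16 * M <= 8 * (n * n - n - 1) by lia.
have h1 : 16 * (n * n) <= c * (n * n) by apply: leq_mul.
have h2 : c * (16 * y) <= c * (2 * ((n + 1) * n)) by apply: leq_mul => //; lia.
have h3 : c * (3 * (n * n) + 2 * n + 16 * M) <= c * (8 * (n * n - n - 1)) by apply: leq_mul.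
have h4 : c * (8 * (n * n - n - 1)) <= c * (16 * U) by apply: leq_mul => //; lia.
rewrite -(@leq_pmul2l 16) //.
lia.
Qed.

Lemma lin_exp c : exists T, forall t, T <= t -> c * (t + 1) <= 2 ^ t.
Proof.
exists (4 * c + 2) => t tT.
set u := t %/ 2.
have tu : 2 * u <= t <= 2 * u + 1 by rewrite /u; lia.
have eu : u < 2 ^ u by apply: ltn_expl.
have h1 : 2 ^ (2 * u) <= 2 ^ t by rewrite leq_exp2l //; lia.
rewrite mulnC expnM in h1.
have h2 : u.+1 * u.+1 <= 2 ^ u * 2 ^ u by apply: leq_mul.
have h3 : c * (t + 1) <= c * (2 * u.+1) by rewrite leq_mul2l; apply/orP; right; lia.
have h3' : c * (2 * u.+1) = (2 * c) * u.+1 by lia.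
have h4 : (2 * c) * u.+1 <= u.+1 * u.+1 by apply: leq_mul => //; lia.
rewrite expnS expn1 in h1 *; lia.
Qed.

Lemma leq_expr m n e : m <= n -> m ^ e <= n ^ e.
Proof. by move=> mn; elim: e => // e IH; rewrite !expnS leq_mul. Qed.

Lemma fact_le n : n`! <= n ^ n.
Proof.
elim: n => // n IH; rewrite factS expnS leq_mul //.
apply: leq_trans IH _; apply: leq_expr; exact: leqnSn.
Qed.

Lemma poly_exp c : exists N, forall n, N <= n -> n ^ c <= 2 ^ n.
Proof.
have [T HT] := lin_exp c.
exists (2 ^ T) => n nN.
have n0 : 0 < n by apply: leq_trans nN; rewrite expn_gt0.
set t := trunc_log 2 n.
have h1 : 2 ^ t <= n by apply: trunc_logP.
have h2 : n < 2 ^ t.+1 by apply: trunc_log_ltn.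
have tT : T <= t.
  rewrite leqNgt; apply/negP => lt.
  have : 2 ^ t.+1 <= 2 ^ T by rewrite leq_exp2l.
  lia.
apply: leq_trans (leq_expr c (ltnW h2)) _.
rewrite -expnM leq_exp2l // mulnC.
have := HT t tT; rewrite addn1 => h3.
by apply: leq_trans h3 h1.
Qed.

Lemma root_le c x y : 0 < c -> x ^ c <= y ^ c -> x <= y.
Proof. by move=> c0; rewrite leq_exp2r. Qed.

Lemma Up_card n : #|Up n| * 2 = n * n - n.
Proof.
have := pairs_count (setT : {set 'I_n}).
rewrite cardsT card_ord => <-.
have -> : Up n :&: setX [set: 'I_n] [set: 'I_n] = Up n.
  by apply/setIidPl; apply/subsetP => -[x y] _; rewrite in_setX !in_setT.
by rewrite mulnC.
Qed.

Section Main.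
Variables (Q : forall n : nat, sgraph n -> bool) (f : nat -> nat) (a : nat) (b : bool).
Hypothesis a_gt0 : 0 < a.
Hypothesis hf : forall m, m <= a * f m.
Hypothesis HF : forall m (H : sgraph m), Q H -> exists B, homb b H B /\ #|B| = f m.

Lemma main_nat M : exists N, forall n, N <= n ->
  #|unique_classes (P_Q Q) n| * 2 ^ M <= 2 * #|graph_classes n|.
Proof.
set bb := 8 * a.
set c := 4 * bb * bb.
have c0 : 0 < c by rewrite /c /bb; lia.
have [N0 HN0] := poly_exp c.
exists (N0 + bb * (4 * bb + 4 * M + 8) + 8 * M + 8) => n nN.
have bb0 : 0 < bb by rewrite /bb; lia.
set k := n %/ bb.
have kge : 4 * bb + 4 * M + 8 <= k.
  by rewrite /k leq_divRL // mulnC; lia.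
have nk : n <= bb * k + bb.
  have := divn_eq n bb; have := ltn_pmod n bb0; rewrite -/k; lia.
have bkn : bb * k <= n.
  have := divn_eq n bb; rewrite -/k; lia.
set U := #|Up n|.
have hU : n * n - n <= 2 * U + 1 by have := Up_card n; rewrite -/U; lia.
set K2 := (k * k - k) %/ 2.
have hK : k * k - k <= 2 * K2 + 1 by rewrite /K2; lia.
have nc : n ^ c <= 2 ^ n by apply: HN0; lia.
have fc : n`! ^ c <= 2 ^ (n * n).
  apply: leq_trans (leq_expr c (fact_le n)) _.
  rewrite -expnM mulnC expnM; apply: leq_trans (leq_expr n nc) _; by rewrite -expnM.
have B1 : 2 ^ (n + M) * n`! <= 2 ^ K2.
  apply: (root_le c0); rewrite expnMn.
  have E := E1_core nk kge hK; rewrite -/c in E.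
  rewrite -!expnM.
  apply: leq_trans (leq_mul (leqnn _) fc) _.
  rewrite -expnD leq_exp2l //; lia.
have B2 : 2 ^ ((n + 1) * a * k + M) * n`! <= 2 ^ U.
  apply: (root_le c0); rewrite expnMn.
  have y8 : 8 * ((n + 1) * a * k) <= (n + 1) * n.
    have -> : 8 * ((n + 1) * a * k) = (n + 1) * (bb * k) by rewrite /bb; lia.
    by apply: leq_mul.
  have c16 : 16 <= c.
    rewrite /c; have h8 : 8 <= bb by rewrite /bb; lia.
    have := leq_mul (leq_mul (leqnn 4) h8) h8; apply: leq_trans => //.
  have nM : 8 * M + 8 <= n by lia.
  have E := E2_core c16 y8 nM hU.
  rewrite -!expnM.
  apply: leq_trans (leq_mul (leqnn _) fc) _.
  rewrite -expnD leq_exp2l //.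
  by rewrite mulnC [U * c]mulnC.
have Hbad := bad_count b n k.
have Hun := unique_bound a_gt0 hf HF n k.
have Hcl := classes_lb n.
have Hgr := graphs_lb n.
have P1 : (2 ^ n).+1 ^ (a * k) <= 2 ^ ((n + 1) * a * k).
  rewrite -[(n + 1) * a * k]mulnA (expnM 2 (n + 1)); apply: leq_expr.
  rewrite addn1 expnS; have : 0 < 2 ^ n by rewrite expn_gt0.
  move: (2 ^ n) => x; lia.
have T1 : #|bad b n k| * 2 ^ M * n`! <= 2 ^ U.
  rewrite -(@leq_pmul2r (2 ^ K2)) ?expn_gt0 //.
  rewrite expnD in B1.
  have h1 := leq_mul Hbad (leqnn (2 ^ M * n`!)).
  rewrite -/K2 -/U in h1.
  have h2 := leq_mul (leqnn (2 ^ U)) B1.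
  move: h1 h2; generalize #|bad b n k| (2 ^ M) (n`!) (2 ^ K2) (2 ^ n) (2 ^ U) => x1 x2 x3 x4 x5 x6.
  lia.
have T2 : (2 ^ n).+1 ^ (a * k) * 2 ^ M * n`! <= 2 ^ U.
  apply: leq_trans B2; rewrite expnD -mulnA -[X in _ <= X]mulnA.
  by apply: leq_mul.
have : #|unique_classes (P_Q Q) n| * 2 ^ M * n`! <= 2 * (#|graph_classes n| * n`!).
  apply: leq_trans (leq_mul (leq_mul Hun (leqnn _)) (leqnn _)) _.
  rewrite !mulnDl; apply: leq_trans (leq_add T1 T2) _.
  rewrite addnn -mul2n leq_mul2l /=; apply: leq_trans Hgr Hcl.
by rewrite mulnA leq_pmul2r ?fact_gt0.
Qed.

End Main.

Unset Implicit Arguments.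
Import Order.TTheory GRing.Theory Num.Theory.

Theorem theorem3 (Q : forall n, sgraph n -> bool) :
  graph_property Q ->
  (exists (f : nat -> nat) (a : nat),
      (0 < a)%N /\ (forall n, (n <= a * f n)%N) /\
      (independence_function Q f \/ clique_function Q f)) ->
  weakly_distinguishing (P_Q Q).
Proof.
move=> _ [f [a [a0 [hf Hc]]]].
have [b HF] : exists b, forall m (H : sgraph m), Q m H -> exists B, homb b H B /\ #|B| = f m.
  case: Hc => [Hi|Hc]; [exists true | exists false] => m H qH.
    by have [B [h c]] := Hi m H qH; exists B.
  by have [B [h c]] := Hc m H qH; exists B.
move=> eps eps0.
set M := Num.Def.archi_bound (2 / eps)%R.
have hM : (2 < eps * (2 ^ M)%:R)%R.
  have := upper_nthrootP (x := (2 / eps)%R) (leqnn M).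
  by rewrite natrX ltr_pdivrMr // mulrC.
have [N HN] := main_nat a0 hf HF M.
exists N => n nN.
have H := HN n nN.
have C0 : (0 < #|graph_classes n|)%N.
  have := leq_trans (graphs_lb n) (classes_lb n).
  case: #|graph_classes n| => //; rewrite mul0n leqn0 => /eqP e.
  by move: (expn_gt0 2 #|Up n|); rewrite e.
rewrite ltr_pdivrMr ?ltr0n //.
set u := #|unique_classes (P_Q Q) n| in H *.
set C := #|graph_classes n| in H C0 *.
have H1 : (u%:R * (2 ^ M)%:R <= 2 * C%:R :> rat)%R by rewrite -natrM -(natrM _ 2) ler_nat.
have H2 : (2 * C%:R < eps * (2 ^ M)%:R * C%:R :> rat)%R by rewrite ltr_pM2r ?ltr0n.
have H3 : (u%:R * (2 ^ M)%:R < eps * C%:R * (2 ^ M)%:R :> rat)%R.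
  apply: le_lt_trans H1 _; by rewrite -mulrA [(C%:R * _)%R]mulrC mulrA.
by rewrite ltr_pM2r ?ltr0n ?expn_gt0 in H3.
Qed.
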